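(* Let $0<a<1$, $0<p<1$, let $x^\ast>0$ be the solution of $P(a,x)=p$, and let $x_0$ be any number with $0<x_0\le x^\ast$ (for instance $x_0=(p\,\Gamma(a+1))^{1/a}$). Define the Newton iterates $$x_{n+1}=x_n-\frac{P(a,x_n)-p}{\partial_x P(a,x_n)},\qquad n\ge0.$$ Then $(x_n)$ is nondecreasing, satisfies $x_n\le x^\ast$ for all $n$, and converges to $x^\ast$.
   Context: $P(a,x)=\frac{1}{\Gamma(a)}\int_0^x t^{a-1}e^{-t}\,dt$ for $a>0$, $x>0$, so $\partial_xP(a,x)=x^{a-1}e^{-x}/\Gamma(a)$. *)

(* Defs.v *)
From Stdlib Require Import Reals Lra ClassicalEpsilon.
Open Scope R_scope.

Definition gamma_integrand (a t : R) : R := Rpower t (a - 1) * exp (- t).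

(* [l] is the (improper at 0) integral  int_0^x f(t) dt :
   l = lim_{e -> 0+} int_e^x f(t) dt  (Riemann integrals on [e,x]). *)
Definition improper_int_0 (f : R -> R) (x l : R) : Prop :=
  forall eps, 0 < eps -> exists delta, 0 < delta /\
    forall e, 0 < e -> e < delta -> e < x ->
      exists pr : Riemann_integrable f e x, Rabs (RiemannInt pr - l) < eps.

Definition lower_gamma (a x : R) : R :=
  epsilon (inhabits 0) (fun l => improper_int_0 (gamma_integrand a) x l).

Definition Gamma_fn (a : R) : R :=
  epsilon (inhabits 0) (fun g => forall eps, 0 < eps -> exists M,
     forall X, M <= X -> Rabs (lower_gamma a X - g) < eps).

Definition P (a x : R) : R := lower_gamma a x / Gamma_fn a.

(* d/dx P(a,x) = x^(a-1) e^(-x) / Gamma(a) *)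
Definition dP (a x : R) : R := Rpower x (a - 1) * exp (- x) / Gamma_fn a.

Fixpoint newton (a p x0 : R) (n : nat) : R :=
  match n with
  | O => x0
  | S m => let x := newton a p x0 m in x - (P a x - p) / dP a x
  end.

(* Main.v *)
Require Import Defs.
From Stdlib Require Import Reals Lra ClassicalEpsilon Classical.
From Coquelicot Require Import Coquelicot.
Open Scope R_scope.

Lemma g_pos a t : 0 < gamma_integrand a t.
Proof. unfold gamma_integrand, Rpower. apply Rmult_lt_0_compat; apply exp_pos. Qed.

Lemma exp_le' x y : x <= y -> exp x <= exp y.
Proof. intros [H|H]; [left; apply exp_increasing; exact H| subst; lra]. Qed.

Lemma g_cont a t : 0 < t -> continuous (gamma_integrand a) t.
Proof.
  intros Ht. apply continuity_pt_filterlim. unfold gamma_integrand.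
  change (continuity_pt (mult_fct (fun t => Rpower t (a-1)) (comp exp Ropp)) t).
  apply continuity_pt_mult.
  - apply derivable_continuous_pt. exists ((a-1) * Rpower t (a-1-1)).
    apply derivable_pt_lim_power; exact Ht.
  - apply continuity_pt_comp.
    + apply continuity_pt_opp. apply continuity_pt_id.
    + apply derivable_continuous_pt. apply derivable_pt_exp.
Qed.

Lemma g_decr a u v : a < 1 -> 0 < u -> u <= v -> gamma_integrand a v <= gamma_integrand a u.
Proof.
  intros ha hu huv. unfold gamma_integrand, Rpower.
  assert (ln u <= ln v) by (apply ln_le; lra).
  apply Rmult_le_compat; try (left; apply exp_pos); apply exp_le'; nra.
Qed.

Lemma exR a u v : 0 < u -> 0 < v -> ex_RInt (gamma_integrand a) u v.
Proof.
  intros hu hv. apply (@ex_RInt_continuous R_CompleteNormedModule). intros z Hz. apply g_cont.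
  assert (0 < Rmin u v) by (apply Rmin_pos; lra). lra.
Qed.

Lemma int_bounds a u v : a < 1 -> 0 < u -> u <= v ->
  gamma_integrand a v * (v - u) <= RInt (gamma_integrand a) u v <= gamma_integrand a u * (v - u).
Proof.
  intros ha hu huv.
  assert (Hc : forall c, RInt (fun _ => c) u v = c * (v - u)).
  { intros c. rewrite RInt_const. unfold scal; simpl; unfold mult; simpl. ring. }
  split.
  - rewrite <- Hc. apply RInt_le; auto. apply ex_RInt_const. apply exR; lra.
    intros x Hx. apply g_decr; lra.
  - rewrite <- Hc. apply RInt_le; auto. apply exR; lra. apply ex_RInt_const.
    intros x Hx. apply g_decr; lra.
Qed.

Lemma chasles a u v w : 0 < u -> 0 < v -> 0 < w ->
  RInt (gamma_integrand a) u v + RInt (gamma_integrand a) v w = RInt (gamma_integrand a) u w.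
Proof.
  intros. rewrite <- (RInt_Chasles (gamma_integrand a) u v w); try apply exR; auto.
Qed.

Lemma pow_int a e : 0 < a -> 0 < e -> e < 1 ->
  is_RInt (fun t => Rpower t (a-1)) e 1 (minus (/a * Rpower 1 a) (/a * Rpower e a)).
Proof.
  intros ha he he1.
  apply (is_RInt_derive (fun t => /a * Rpower t a)).
  - intros x Hx. assert (0 < x).
    { assert (Rmin e 1 = e) by (apply Rmin_left; lra). lra. }
    replace (Rpower x (a-1)) with (/a * (a * Rpower x (a-1))) by (field; lra).
    apply is_derive_scal. apply is_derive_Reals. apply derivable_pt_lim_power. auto.
  - intros x Hx. assert (0 < x).
    { assert (Rmin e 1 = e) by (apply Rmin_left; lra). lra. }
    apply continuity_pt_filterlim. apply derivable_continuous_pt.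
    exists ((a-1) * Rpower x (a-1-1)). apply derivable_pt_lim_power; auto.
Qed.

Lemma S_bound a e : 0 < a -> 0 < e -> e < 1 -> RInt (gamma_integrand a) e 1 <= / a.
Proof.
  intros ha he he1. pose proof (pow_int a e ha he he1) as H.
  apply Rle_trans with (RInt (fun t => Rpower t (a-1)) e 1).
  - apply RInt_le; try lra. apply exR; lra. eexists; exact H.
    intros x Hx. unfold gamma_integrand.
    assert (exp (-x) <= 1) by (rewrite <- exp_0; apply exp_le'; lra).
    assert (0 < Rpower x (a-1)) by (unfold Rpower; apply exp_pos). nra.
  - rewrite (is_RInt_unique _ _ _ _ H). unfold minus, plus, opp; simpl.
    assert (Rpower 1 a = 1) by (unfold Rpower; rewrite ln_1, Rmult_0_r, exp_0; auto).
    assert (0 < Rpower e a) by (unfold Rpower; apply exp_pos).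
    assert (0 < / a) by (apply Rinv_0_lt_compat; lra). nra.
Qed.

Lemma improper_unique f x l1 l2 : 0 < x -> improper_int_0 f x l1 -> improper_int_0 f x l2 -> l1 = l2.
Proof.
  intros hx H1 H2.
  destruct (Rtotal_order l1 l2) as [Hl|[Hl|Hl]]; auto; exfalso;
  [ set (eps := (l2 - l1)/2) | set (eps := (l1 - l2)/2) ];
  (assert (he : 0 < eps) by (unfold eps; lra));
  destruct (H1 eps he) as [d1 [hd1 K1]]; destruct (H2 eps he) as [d2 [hd2 K2]];
  set (e := Rmin (Rmin d1 d2) x / 2);
  (assert (He : 0 < e /\ e < d1 /\ e < d2 /\ e < x) by
    (unfold e; assert (Rmin (Rmin d1 d2) x <= Rmin d1 d2) by apply Rmin_l;
     assert (Rmin (Rmin d1 d2) x <= x) by apply Rmin_r;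
     assert (Rmin d1 d2 <= d1) by apply Rmin_l; assert (Rmin d1 d2 <= d2) by apply Rmin_r;
     assert (0 < Rmin (Rmin d1 d2) x) by (repeat apply Rmin_pos; lra); lra));
  destruct (K1 e ltac:(lra) ltac:(lra) ltac:(lra)) as [pr1 A1];
  destruct (K2 e ltac:(lra) ltac:(lra) ltac:(lra)) as [pr2 A2];
  rewrite (RiemannInt_P5 pr1 pr2) in A1;
  apply Rabs_def2 in A1; apply Rabs_def2 in A2; unfold eps in *; lra.
Qed.

Definition Msup (a : R) : R :=
  epsilon (inhabits 0) (fun m => is_lub (fun y => exists e, 0 < e < 1 /\ y = RInt (gamma_integrand a) e 1) m).

Lemma Msup_lub a : 0 < a -> is_lub (fun y => exists e, 0 < e < 1 /\ y = RInt (gamma_integrand a) e 1) (Msup a).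
Proof.
  intros ha. unfold Msup. apply epsilon_spec.
  destruct (completeness (fun y => exists e, 0 < e < 1 /\ y = RInt (gamma_integrand a) e 1)) as [m Hm].
  - exists (/a). intros y [e [He ->]]. apply S_bound; lra.
  - exists (RInt (gamma_integrand a) (1/2) 1). exists (1/2); split; [lra|auto].
  - exists m; exact Hm.
Qed.

Lemma lower_gamma_eq a x : 0 < a -> a < 1 -> 0 < x ->
  lower_gamma a x = Msup a + RInt (gamma_integrand a) 1 x.
Proof.
  intros ha ha1 hx.
  assert (H1 : improper_int_0 (gamma_integrand a) x (Msup a + RInt (gamma_integrand a) 1 x)).
  { intros eps heps. destruct (Msup_lub a ha) as [Hub Hlub].
    destruct (classic (exists y, (exists e, 0 < e < 1 /\ y = RInt (gamma_integrand a) e 1) /\ Msup a - eps < y))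
      as [[y [[e0 [He0 ->]] Hy]] | Hn].
    - exists e0. split; [lra|]. intros e he hee0 hex.
      exists (ex_RInt_Reals_0 _ _ _ (exR a e x he hx)).
      rewrite <- RInt_Reals. rewrite <- (chasles a e 1 x); try lra.
      assert (RInt (gamma_integrand a) e 1 <= Msup a) by (apply Hub; exists e; split; [lra|auto]).
      assert (0 <= RInt (gamma_integrand a) e e0).
      { apply RInt_ge_0; try lra. apply exR; lra. intros; left; apply g_pos. }
      rewrite <- (chasles a e e0 1) in *; try lra.
      apply Rabs_def1; lra.
    - exfalso. assert (Msup a <= Msup a - eps); [|lra].
      apply Hlub. intros y Hy. destruct (Rle_dec y (Msup a - eps)) as [|Hnn]; auto.
      exfalso; apply Hn; exists y; split; auto; lra. }
  apply (improper_unique (gamma_integrand a) x); auto.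
  unfold lower_gamma. apply epsilon_spec. eexists; exact H1.
Qed.

Lemma L_diff a u v : 0 < a -> a < 1 -> 0 < u -> 0 < v ->
  lower_gamma a v - lower_gamma a u = RInt (gamma_integrand a) u v.
Proof.
  intros. rewrite !lower_gamma_eq; auto. rewrite <- (chasles a 1 u v); try lra.
Qed.

Lemma L_pos a x : 0 < a -> a < 1 -> 0 < x -> 0 < lower_gamma a x.
Proof.
  intros ha ha1 hx. rewrite lower_gamma_eq; auto.
  set (e := Rmin (x/2) (1/2)).
  assert (He : 0 < e /\ e <= x/2 /\ e <= 1/2).
  { unfold e; split; [apply Rmin_pos; lra| split; [apply Rmin_l|apply Rmin_r]]. }
  destruct (Msup_lub a ha) as [Hub _].
  assert (RInt (gamma_integrand a) e 1 <= Msup a) by (apply Hub; exists e; split; [lra|auto]).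
  pose proof (int_bounds a e x ha1 ltac:(lra) ltac:(lra)) as [B _].
  rewrite <- (chasles a e 1 x) in B; try lra.
  pose proof (g_pos a x). nra.
Qed.

Theorem mainTheorem4 (a p xstar x0 : R) :
  0 < a -> a < 1 -> 0 < p -> p < 1 ->
  0 < xstar -> P a xstar = p ->
  0 < x0 -> x0 <= xstar ->
  (forall n, newton a p x0 n <= newton a p x0 (S n)) /\
  (forall n, newton a p x0 n <= xstar) /\
  Un_cv (newton a p x0) xstar.
Proof.
  intros ha ha1 hp hp1 hxs HP hx0 hx0s.
  set (c := / Gamma_fn a).
  set (g := gamma_integrand a).
  set (L := lower_gamma a).
  assert (HPe : forall x, P a x = L x * c) by reflexivity.
  assert (HdP : forall x, dP a x = g x * c) by reflexivity.
  assert (hLs : 0 < L xstar) by (apply L_pos; auto).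
  assert (hc : 0 < c).
  { rewrite HPe in HP. destruct (Rle_or_lt c 0); auto. nra. }
  set (k := g xstar / g x0).
  assert (hg0 : 0 < g x0) by apply g_pos.
  assert (hgs : 0 < g xstar) by apply g_pos.
  assert (hgs0 : g xstar <= g x0) by (apply g_decr; auto).
  assert (hk : k * g x0 = g xstar) by (unfold k; field; lra).
  assert (hk0 : 0 < k) by (unfold k; apply Rdiv_lt_0_compat; auto).
  assert (hk1 : k <= 1) by nra.
  assert (Step : forall x, x0 <= x <= xstar ->
    let x' := x - (P a x - p) / dP a x in
    x <= x' <= xstar /\ xstar - x' <= (1 - k) * (xstar - x)).
  { intros x Hx x'.
    assert (hgx : 0 < g x) by apply g_pos.
    assert (hgx0 : g x <= g x0) by (apply g_decr; lra).
    pose proof (int_bounds a x xstar ha1 ltac:(lra) ltac:(lra)) as [B1 B2].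
    rewrite <- (L_diff a x xstar) in B1, B2; try lra.
    fold g L in B1, B2.
    set (q := (L xstar - L x) / g x).
    assert (hq : q * g x = L xstar - L x) by (unfold q; field; lra).
    assert (hx' : x' = x + q).
    { unfold x', q. rewrite HdP, <- HP, !HPe. fold L g. field. split; lra. }
    rewrite hx'.
    assert (q <= xstar - x) by nra.
    assert (0 <= q) by nra.
    assert (q * g x0 >= g xstar * (xstar - x)) by nra.
    split; [lra|]. nra. }
  assert (Inv : forall n, x0 <= newton a p x0 n <= xstar /\
     xstar - newton a p x0 n <= (1 - k) ^ n * (xstar - x0)).
  { induction n as [|n IH].
    - simpl. lra.
    - destruct IH as [H1 H2]. destruct (Step _ H1) as [S1 S2].
      simpl newton. split; [lra|]. simpl pow.
      assert (0 <= 1 - k) by lra. nra. }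
  split; [|split].
  - intros n. destruct (Inv n) as [H1 _]. destruct (Step _ H1) as [S1 _]. simpl. lra.
  - intros n. destruct (Inv n) as [[_ H] _]. exact H.
  - intros eps heps.
    assert (hr : Rabs (1 - k) < 1) by (rewrite Rabs_right; lra).
    destruct (pow_lt_1_zero (1 - k) hr (eps / (xstar - x0 + 1))) as [N HN].
    { apply Rdiv_lt_0_compat; lra. }
    exists N. intros n Hn. specialize (HN n Hn).
    destruct (Inv n) as [[I1 I2] I3].
    assert (hpw : 0 <= (1 - k) ^ n) by (apply pow_le; lra).
    rewrite Rabs_right in HN by lra.
    unfold R_dist. rewrite Rabs_left1 by lra.
    assert ((1 - k) ^ n * (xstar - x0) <= eps / (xstar - x0 + 1) * (xstar - x0)) by nra.
    assert (eps / (xstar - x0 + 1) * (xstar - x0) < eps).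
    { unfold Rdiv. rewrite Rmult_assoc.
      assert (/ (xstar - x0 + 1) * (xstar - x0) < 1).
      { apply Rmult_lt_reg_l with (xstar - x0 + 1); [lra|].
        rewrite <- Rmult_assoc, Rinv_r by lra. lra. }
      nra. }
    lra.
Qed.
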